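(* Let $F$, $X_0$, $B$, $C$ be as in the context, and let $X(t)=\sum_{p=0}^\infty X_pt^p$ be an analytic family of solutions of $F(X)=0$ with initial term $X_0$. Suppose $X_3$ and $X_4$ belong to the linear span $L$ of $X_1$ and $X_2$. Then for all $i,j\in\{1,2\}$ the linear system $CX=-B(X_i,X_j)-B(X_j,X_i)$ has a solution $X\in L$.
   Context: Let $m,n\ge 1$ and let $F=(F_1,\dots,F_n):\mathbb{R}^m\to\mathbb{R}^n$, where each component is a polynomial of degree at most 2 written as $F_k(X)=\sum_{i=1}^m\sum_{j=1}^m\alpha^k_{ij}x_ix_j+\sum_{i=1}^m\beta^k_ix_i+\gamma^k$ for $X=(x_1,\dots,x_m)$, with real coefficients and $\alpha^k_{ij}=\alpha^k_{ji}$. Fix $X_0\in\mathbb{R}^m$ with $F(X_0)=0$. Define the bilinear map $B:\mathbb{R}^m\times\mathbb{R}^m\to\mathbb{R}^n$ by $B(X,Y)_k=\sum_{i,j=1}^m\alpha^k_{ij}x_iy_j$, the linear map $A:\mathbb{R}^m\to\mathbb{R}^n$ by $(AX)_k=\sum_{i=1}^m\beta^k_ix_i$, and the linear map $C:\mathbb{R}^m\to\mathbb{R}^n$ by $CX=B(X_0,X)+B(X,X_0)+AX$. An analytic family of solutions with initial term $X_0$ is a power series $X(t)=\sum_{p=0}^\infty X_pt^p$ with $X_p\in\mathbb{R}^m$, positive radius of convergence, constant term equal to $X_0$, and $F(X(t))=0$ for all sufficiently small $t$. *)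

(* Defs.v *)
From Stdlib Require Import Reals.
From Coquelicot Require Import Coquelicot.
From mathcomp Require Import ssreflect ssrfun ssrbool eqtype ssrnat seq fintype bigop.

Open Scope R_scope.

Definition vec (m : nat) := 'I_m -> R.

Definition rsum {m : nat} (f : 'I_m -> R) : R := \big[Rplus/0]_(i < m) f i.

Definition Fmap {m n : nat} (alpha : 'I_n -> 'I_m -> 'I_m -> R)
  (beta : 'I_n -> 'I_m -> R) (gamma : 'I_n -> R) (X : vec m) : vec n :=
  fun k => rsum (fun i => rsum (fun j => alpha k i j * X i * X j))
           + rsum (fun i => beta k i * X i) + gamma k.

Definition Bmap {m n : nat} (alpha : 'I_n -> 'I_m -> 'I_m -> R)
  (X Y : vec m) : vec n :=
  fun k => rsum (fun i => rsum (fun j => alpha k i j * X i * Y j)).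

Definition Amap {m n : nat} (beta : 'I_n -> 'I_m -> R) (X : vec m) : vec n :=
  fun k => rsum (fun i => beta k i * X i).

Definition Cmap {m n : nat} (alpha : 'I_n -> 'I_m -> 'I_m -> R)
  (beta : 'I_n -> 'I_m -> R) (X0 X : vec m) : vec n :=
  fun k => Bmap alpha X0 X k + Bmap alpha X X0 k + Amap beta X k.

Definition series_val {m : nat} (Xs : nat -> vec m) (t : R) : vec m :=
  fun i => PSeries (fun p => Xs p i) t.

Definition analytic_family {m n : nat} (alpha : 'I_n -> 'I_m -> 'I_m -> R)
  (beta : 'I_n -> 'I_m -> R) (gamma : 'I_n -> R) (X0 : vec m)
  (Xs : nat -> vec m) : Prop :=
  (forall i : 'I_m, Rbar_lt 0 (CV_radius (fun p => Xs p i))) /\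
  (forall i : 'I_m, Xs 0%nat i = X0 i) /\
  (exists eps : R, 0 < eps /\
     forall t : R, Rabs t < eps ->
       forall k : 'I_n, Fmap alpha beta gamma (series_val Xs t) k = 0).

Definition in_span2 {m : nat} (U V Y : vec m) : Prop :=
  exists a b : R, forall i : 'I_m, Y i = a * U i + b * V i.

(* Main.v *)
From HB Require Import structures.
Require Import Defs.
From Stdlib Require Import Reals Lra Psatz.
From Coquelicot Require Import Coquelicot.
From mathcomp Require Import ssreflect ssrfun ssrbool eqtype ssrnat seq fintype bigop.
Open Scope R_scope.

Lemma ips_scal (c : R) a t l : is_pseries a t l -> is_pseries (fun n => c * a n) t (c * l).
Proof. intros. apply (is_pseries_scal c a t l). apply Rmult_comm. auto. Qed.

Lemma ips_plus (a b : nat -> R) t la lb : is_pseries a t la -> is_pseries b t lb ->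
  is_pseries (fun n => a n + b n) t (la + lb).
Proof. intros Ha Hb. exact (is_pseries_plus a b t la lb Ha Hb). Qed.

Lemma ips_const (g : R) t : is_pseries (fun n => if n is O then g else 0) t g.
Proof.
  rewrite /is_pseries /is_series.
  apply: (filterlim_ext (fun _ => g)); last by apply filterlim_const.
  elim => [|n IH] /=.
  - by rewrite sum_O /scal /= mult_one_l.
  - rewrite sum_Sn -IH /plus /= /scal /= /mult /=. ring.
Qed.

Lemma ips_rsum {m : nat} (f : 'I_m -> nat -> R) (l : 'I_m -> R) t :
  (forall i, is_pseries (f i) t (l i)) ->
  is_pseries (fun n => rsum (fun i => f i n)) t (rsum l).
Proof.
  move=> H. rewrite /rsum. elim: (index_enum _) => [|x s IH].
  - rewrite big_nil. apply: (is_pseries_ext (fun _ => 0)).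
      by move=> n; rewrite big_nil.
    have := ips_const 0 t. apply: is_pseries_ext. by case.
  - rewrite big_cons. apply: (is_pseries_ext (fun n => f x n + \big[Rplus/0]_(i <- s) f i n)).
      by move=> n; rewrite big_cons.
    by apply ips_plus.
Qed.

Lemma rad_pos (c : nat -> R) t : t <> 0 -> ex_pseries c t -> Rbar_lt 0 (CV_radius c).
Proof.
  move=> Ht Hc.
  case: (Rbar_lt_le_dec (CV_radius c) (Rabs t)) => H.
  - exfalso. apply: (CV_disk_outside c t H).
    apply: (is_lim_seq_ext (fun n => scal (pow_n t n) (c n)) _ 0); last first.
      by apply ex_series_lim_0.
      move=> n. rewrite /scal /= /mult /= Rmult_comm. f_equal.

  - apply: Rbar_lt_le_trans H. simpl. by apply Rabs_pos_lt.
Qed.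

Lemma coef_zero (c : nat -> R) d : 0 < d ->
  (forall t, Rabs t < d -> is_pseries c t 0) -> forall n, c n = 0.
Proof.
  move=> Hd H n.
  have Hr : Rbar_lt 0 (CV_radius c).
    apply (rad_pos c (d/2)). lra. exists 0. apply H. rewrite Rabs_pos_eq; lra.
  have := PSeries_ext_recip c (fun _ => 0) n Hr.
  rewrite CV_radius_const_0. apply => //.
  exists (mkposreal d Hd) => y Hy.
  rewrite PSeries_const_0. apply: (is_pseries_unique c y 0). apply H.
  move: Hy. rewrite /ball /= /AbsRing_ball /abs /minus /plus /opp /=. 
  by rewrite Ropp_0 Rplus_0_r.
Qed.
Lemma Rplus_assoc' : associative Rplus. Proof. intros ???; ring. Qed.
HB.instance Definition _ := Monoid.isComLaw.Build R 0 Rplus Rplus_assoc' Rplus_comm Rplus_0_l.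

Lemma rsum_ext {m : nat} (f g : 'I_m -> R) : (forall i, f i = g i) -> rsum f = rsum g.
Proof. move=> H; rewrite /rsum; apply: eq_bigr => i _; apply H. Qed.

Lemma rsum_plus {m : nat} (f g : 'I_m -> R) : rsum (fun i => f i + g i) = rsum f + rsum g.
Proof. by rewrite /rsum big_split. Qed.

Lemma rsum_scal {m : nat} (c : R) (f : 'I_m -> R) : rsum (fun i => c * f i) = c * rsum f.
Proof.
  rewrite /rsum. apply: (big_ind2 (fun x y => x = c * y)) => //.
  - ring.
  - move=> x1 x2 y1 y2 -> ->; ring.
Qed.

Section Lin.
Variables (m n : nat) (alpha : 'I_n -> 'I_m -> 'I_m -> R) (beta : 'I_n -> 'I_m -> R).

Lemma Bmap_linr (U V W : vec m) a b k :
  Bmap alpha U (fun i => a * V i + b * W i) k = a * Bmap alpha U V k + b * Bmap alpha U W k.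
Proof.
  rewrite /Bmap -!rsum_scal -rsum_plus; apply rsum_ext => i.
  rewrite -!rsum_scal -rsum_plus; apply rsum_ext => j. ring.
Qed.

Lemma Bmap_linl (U V W : vec m) a b k :
  Bmap alpha (fun i => a * V i + b * W i) U k = a * Bmap alpha V U k + b * Bmap alpha W U k.
Proof.
  rewrite /Bmap -!rsum_scal -rsum_plus; apply rsum_ext => i.
  rewrite -!rsum_scal -rsum_plus; apply rsum_ext => j. ring.
Qed.

Lemma Amap_lin (V W : vec m) a b k :
  Amap beta (fun i => a * V i + b * W i) k = a * Amap beta V k + b * Amap beta W k.
Proof.
  rewrite /Amap -!rsum_scal -rsum_plus; apply rsum_ext => i. ring.
Qed.

Lemma Cmap_lin X0 (V W : vec m) a b k :
  Cmap alpha beta X0 (fun i => a * V i + b * W i) k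
  = a * Cmap alpha beta X0 V k + b * Cmap alpha beta X0 W k.
Proof. rewrite /Cmap Bmap_linr Bmap_linl Amap_lin. ring. Qed.

Lemma Bmap_ext (U U' V V' : vec m) k : (forall i, U i = U' i) -> (forall i, V i = V' i) ->
  Bmap alpha U V k = Bmap alpha U' V' k.
Proof.
  move=> HU HV; rewrite /Bmap; apply rsum_ext => i; apply rsum_ext => j. by rewrite HU HV.
Qed.

Lemma Amap_ext (V V' : vec m) k : (forall i, V i = V' i) -> Amap beta V k = Amap beta V' k.
Proof. move=> HV; rewrite /Amap; apply rsum_ext => i. by rewrite HV. Qed.

Lemma Bmap_sym (U V : vec m) k : (forall i j, alpha k i j = alpha k j i) ->
  Bmap alpha U V k = Bmap alpha V U k.
Proof.
  move=> Hs; rewrite /Bmap /rsum exchange_big /=. apply: eq_bigr => i _; apply: eq_bigr => j _.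
  rewrite Hs. ring.
Qed.

Lemma mult_expand (U V : nat -> vec m) k (M : nat) :
  rsum (fun i => rsum (fun j => alpha k i j * sum_f_R0 (fun l => U l i * V l j) M))
  = sum_f_R0 (fun l => Bmap alpha (U l) (V l) k) M.
Proof.
  elim: M => [|M IH] /=.
  - rewrite /Bmap; apply rsum_ext => i; apply rsum_ext => j; ring.
  - rewrite -IH /Bmap -rsum_plus; apply rsum_ext => i.
    rewrite -rsum_plus; apply rsum_ext => j; ring.
Qed.
End Lin.

Lemma Cmap_ext {m n : nat} alpha beta X0 (V V' : vec m) (k : 'I_n) :
  (forall i, V i = V' i) -> Cmap alpha beta X0 V k = Cmap alpha beta X0 V' k.
Proof.
  move=> H; rewrite /Cmap (Bmap_ext _ _ _ X0 X0 V V') // (Bmap_ext _ _ _ V V' X0 X0) //.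
  by rewrite (Amap_ext _ _ _ V V').
Qed.

Lemma pos_below {m : nat} (r : 'I_m -> Rbar) : (forall i, Rbar_lt 0 (r i)) ->
  exists e, 0 < e /\ forall i, Rbar_lt e (r i).
Proof.
  move=> H.
  have Hone : forall i, exists x, 0 < x /\ Rbar_lt x (r i).
    move=> i; move: (H i); case: (r i) => [x| |] /= Hx.
    - exists (x/2); split; lra.
    - exists 1; split => //; lra.
    - done.
  suff [e [He Hs]] : exists e, 0 < e /\ forall i, i \in enum 'I_m -> Rbar_lt e (r i).
    exists e; split => // i; apply Hs; by rewrite mem_enum.
  elim: (enum 'I_m) => [|x s [e [He IH]]].
  - exists 1; split => //; lra.
  - have [y [Hy Hyr]] := Hone x.
    exists (Rmin e y); split; first by apply Rmin_pos.
    move=> i; rewrite in_cons => /orP [/eqP -> | Hi].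
    + apply: Rbar_le_lt_trans Hyr; simpl; apply Rmin_r.
    + apply: Rbar_le_lt_trans (IH i Hi); simpl; apply Rmin_l.
Qed.

Theorem theorem4 (m n : nat) (Hm : (1 <= m)%nat) (Hn : (1 <= n)%nat)
  (alpha : 'I_n -> 'I_m -> 'I_m -> R) (beta : 'I_n -> 'I_m -> R)
  (gamma : 'I_n -> R)
  (Halpha : forall (k : 'I_n) (i j : 'I_m), alpha k i j = alpha k j i)
  (X0 : vec m) (HX0 : forall k : 'I_n, Fmap alpha beta gamma X0 k = 0)
  (Xs : nat -> vec m) (Hfam : analytic_family alpha beta gamma X0 Xs)
  (H3 : in_span2 (Xs 1%nat) (Xs 2%nat) (Xs 3%nat))
  (H4 : in_span2 (Xs 1%nat) (Xs 2%nat) (Xs 4%nat)) :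
  forall i j : nat, (i = 1 \/ i = 2)%nat -> (j = 1 \/ j = 2)%nat ->
    exists X : vec m, in_span2 (Xs 1%nat) (Xs 2%nat) X /\
      forall k : 'I_n,
        Cmap alpha beta X0 X k
        = - Bmap alpha (Xs i) (Xs j) k - Bmap alpha (Xs j) (Xs i) k.
Proof.
  case: Hfam => [Hrad [H0 [eps [Heps HF]]]].
  have [e [He Hre]] := pos_below (fun i => CV_radius (fun p => Xs p i)) Hrad.
  pose c (k : 'I_n) (p : nat) :=
    rsum (fun i => rsum (fun j => alpha k i j * PS_mult (fun q => Xs q i) (fun q => Xs q j) p))
    + rsum (fun i => beta k i * Xs p i) + (if p is O then gamma k else 0).
  have Hc : forall k p, c k p = 0.
    move=> k; apply: (coef_zero (c k) (Rmin eps e)); first by apply Rmin_pos.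
    move=> t Ht.
    have Hte : forall i, Rbar_lt (Rabs t) (CV_radius (fun p => Xs p i)).
      move=> i; apply: Rbar_le_lt_trans (Hre i); simpl.
      have := Rmin_r eps e; lra.
    have Hx : forall i, is_pseries (fun p => Xs p i) t (series_val Xs t i).
      move=> i; apply PSeries_correct; apply CV_radius_inside; apply Hte.
    have Hteps : Rabs t < eps by have := Rmin_l eps e; lra.
    rewrite -(HF t Hteps k).
    rewrite /Fmap.
    rewrite (rsum_ext (fun i => rsum (fun j => alpha k i j * series_val Xs t i * series_val Xs t j))
       (fun i => rsum (fun j => alpha k i j * (series_val Xs t i * series_val Xs t j)))); last first.
      move=> i; apply rsum_ext => j; ring.
    apply ips_plus; [apply ips_plus|apply ips_const].
    - apply ips_rsum => i; apply ips_rsum => j; apply ips_scal.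
      apply is_pseries_mult; by [apply Hx|apply Hx|apply Hte|apply Hte].
    - apply ips_rsum => i; apply ips_scal; apply Hx.
  have Ep : forall k p, (0 < p)%nat ->
      sum_f_R0 (fun l => Bmap alpha (Xs l) (Xs (Nat.sub p l)) k) p + Amap beta (Xs p) k = 0.
    move=> k [|p] // _.
    rewrite -(mult_expand m n alpha Xs (fun l => Xs (Nat.sub p.+1 l)) k p.+1) -(Hc k p.+1) /c.
    rewrite Rplus_0_r /Amap. reflexivity.
  have HB0 : forall k V, Bmap alpha (Xs 0%nat) V k = Bmap alpha X0 V k.
    move=> k V; apply Bmap_ext => //.
  have HB0' : forall k V, Bmap alpha V (Xs 0%nat) k = Bmap alpha V X0 k.
    move=> k V; apply Bmap_ext => //.
  have C1 : forall k, Cmap alpha beta X0 (Xs 1%nat) k = 0.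
    move=> k; have := Ep k 1%nat isT; simpl; rewrite /Cmap -HB0 -HB0'; lra.
  have C2 : forall k, Cmap alpha beta X0 (Xs 2%nat) k = - Bmap alpha (Xs 1%nat) (Xs 1%nat) k.
    move=> k; have := Ep k 2%nat isT; simpl; rewrite /Cmap -HB0 -HB0'; lra.
  have C3 : forall k, Cmap alpha beta X0 (Xs 3%nat) k
      = - Bmap alpha (Xs 1%nat) (Xs 2%nat) k - Bmap alpha (Xs 2%nat) (Xs 1%nat) k.
    move=> k; have := Ep k 3%nat isT; simpl; rewrite /Cmap -HB0 -HB0'; lra.
  have C4 : forall k, Cmap alpha beta X0 (Xs 4%nat) k
      = - Bmap alpha (Xs 1%nat) (Xs 3%nat) k - Bmap alpha (Xs 2%nat) (Xs 2%nat) k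
        - Bmap alpha (Xs 3%nat) (Xs 1%nat) k.
    move=> k; have := Ep k 4%nat isT; simpl; rewrite /Cmap -HB0 -HB0'; lra.
  case: H3 => [a [b Hab]]. case: H4 => [a4 [b4 Hab4]].
  have Sym : forall k U V, Bmap alpha U V k = Bmap alpha V U k.
    move=> k U V; apply Bmap_sym => i j; apply Halpha.
  have C3' : forall k, a * Cmap alpha beta X0 (Xs 1%nat) k + b * Cmap alpha beta X0 (Xs 2%nat) k
      = - Bmap alpha (Xs 1%nat) (Xs 2%nat) k - Bmap alpha (Xs 2%nat) (Xs 1%nat) k.
    move=> k; rewrite -C3 -Cmap_lin; apply Cmap_ext => i; by rewrite Hab.
  have C4' : forall k, a4 * Cmap alpha beta X0 (Xs 1%nat) k + b4 * Cmap alpha beta X0 (Xs 2%nat) k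
      = - (a * Bmap alpha (Xs 1%nat) (Xs 1%nat) k + b * Bmap alpha (Xs 1%nat) (Xs 2%nat) k)
        - Bmap alpha (Xs 2%nat) (Xs 2%nat) k
        - (a * Bmap alpha (Xs 1%nat) (Xs 1%nat) k + b * Bmap alpha (Xs 2%nat) (Xs 1%nat) k).
    move=> k; rewrite -Bmap_linr -Bmap_linl.
    rewrite (Bmap_ext _ _ _ (fun i => a * Xs 1%nat i + b * Xs 2%nat i) (Xs 3%nat) (Xs 1%nat) (Xs 1%nat)); last by [].
      rewrite (Bmap_ext _ _ _ (Xs 1%nat) (Xs 1%nat) (fun i => a * Xs 1%nat i + b * Xs 2%nat i) (Xs 3%nat)) //.
      rewrite -C4 -Cmap_lin; apply Cmap_ext => i; by rewrite Hab4.
    by move=> i; rewrite Hab.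
  move=> i j [->|->] [->|->].
  - exists (fun i => 0 * Xs 1%nat i + 2 * Xs 2%nat i); split; first by exists 0, 2.
    move=> k; rewrite Cmap_lin C1 C2; lra.
  - exists (Xs 3%nat); split; first by exists a, b.
    move=> k; by rewrite C3.
  - exists (Xs 3%nat); split; first by exists a, b.
    move=> k; rewrite C3; lra.
  - exists (fun i => 0 * Xs 1%nat i + (2*b4 - 4*a - 2*b*b) * Xs 2%nat i).
    split; first by eexists; eexists.
    move=> k; rewrite Cmap_lin C1 C2.
    have E3 := C3' k. have E4 := C4' k.
    rewrite C1 C2 (Sym k (Xs 2%nat) (Xs 1%nat)) in E3.
    rewrite C1 C2 (Sym k (Xs 2%nat) (Xs 1%nat)) in E4.
    set B11 := Bmap alpha (Xs 1%nat) (Xs 1%nat) k in E3 E4 *.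
    set B12 := Bmap alpha (Xs 1%nat) (Xs 2%nat) k in E3 E4 *.
    set B22 := Bmap alpha (Xs 2%nat) (Xs 2%nat) k in E3 E4 *.
    have HB12 : B12 = b * B11 / 2 by lra.
    rewrite HB12 in E4. nra.
Qed.
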